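(* Let $n\ge 2$ and let $\mathcal{S}=\{\mathbf{s}\in\mathbb{R}^n:\tfrac12\mathbf{s}^TA\mathbf{s}+\mathbf{b}^T\mathbf{s}+c=0\}$ be a quadric hypersurface, where $A$ is a real symmetric $n\times n$ matrix different from the zero matrix, $\mathbf{b}\in\mathbb{R}^n$, $c\in\mathbb{R}$. Suppose $\mathcal{S}$ does not contain a line but contains at least two points. Then there exist a vector function $\boldsymbol{\sigma}=(\sigma_1,\dots,\sigma_n)^T$ with rational components in $n-1$ variables and a domain $D\subseteq\mathbb{R}^{n-1}$ such that $\{\boldsymbol{\sigma}(\mathbf{t}):\mathbf{t}\in D\}$ is a rationally parameterisable hypersurface coinciding with $\mathcal{S}$ up to an exceptional set of hypersurface measure zero, and every nonempty open subset $O$ of $D\setminus\sigma_1^{-1}(0)$ in $\mathbb{R}^{n-1}$ satisfies the hyperplane condition and the inner point condition.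
   Context: A rationally parameterisable hypersurface is a set $\{\boldsymbol{\sigma}(\mathbf{t}):\mathbf{t}\in D\}\subseteq\mathbb{R}^n$, where $\boldsymbol{\sigma}:\mathbb{R}^{n-1}\to\mathbb{R}^n$ has rational functions as components and $D\subseteq\mathbb{R}^{n-1}$ is a set on which they are all defined. $\sigma_1^{-1}(0)$ is the zero set of $\sigma_1$. The normalized function is $\hat{\boldsymbol{\sigma}}(\mathbf{t})=(\sigma_2(\mathbf{t})/\sigma_1(\mathbf{t}),\dots,\sigma_n(\mathbf{t})/\sigma_1(\mathbf{t}))^T$ for $\mathbf{t}\in D\setminus\sigma_1^{-1}(0)$. For an open $O\subseteq D\setminus\sigma_1^{-1}(0)$: the hyperplane condition means $\boldsymbol{\sigma}(O)$ is not contained in any (affine) hyperplane of $\mathbb{R}^n$; the inner point condition means there is $\mathbf{t}\in O$ such that $\hat{\boldsymbol{\sigma}}(\mathbf{t})$ is an interior point of $\hat{\boldsymbol{\sigma}}(O)=\{\hat{\boldsymbol{\sigma}}(\mathbf{t}'):\mathbf{t}'\in O\}$ in $\mathbb{R}^{n-1}$. *)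

(* Defs.v *)
(* R : realType, vectors in R^m are column vectors 'cV[R]_m
   (with the product = Euclidean topology of mathcomp-analysis). *)
From HB Require Import structures.
From mathcomp Require Import all_boot all_order all_algebra.
From mathcomp Require Import all_classical all_reals all_analysis.
Set Implicit Arguments. Unset Strict Implicit. Unset Printing Implicit Defensive.
Import Order.TTheory GRing.Theory Num.Theory.
Import numFieldNormedType.Exports.
Local Open Scope classical_set_scope.
Local Open Scope ring_scope.

(* A real polynomial in m variables, given as a finite list of monomials
   (coefficient, exponent vector). *)
Definition mpolyfun (R : realType) (m : nat) := seq (R * {ffun 'I_m -> nat}).

Definition peval (R : realType) (m : nat) (p : mpolyfun R m) (t : 'cV[R]_m) : R :=
  \sum_(u <- p) u.1 * \prod_(i < m) (t i ord0) ^+ (u.2 i).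

Record ratvecfun (R : realType) (m n : nat) := RatVecFun {
  rv_num : 'I_n -> mpolyfun R m;
  rv_den : 'I_n -> mpolyfun R m }.

Definition defined_on (R : realType) (m n : nat) (sig : ratvecfun R m n)
    (D : set 'cV[R]_m) : Prop :=
  forall t, D t -> forall i, peval (rv_den sig i) t != 0.

Definition rveval (R : realType) (m n : nat) (sig : ratvecfun R m n)
    (t : 'cV[R]_m) : 'cV[R]_n :=
  \col_i (peval (rv_num sig i) t / peval (rv_den sig i) t).

Definition quadric (R : realType) (n : nat) (A : 'M[R]_n) (b : 'cV[R]_n) (c : R)
    : set 'cV[R]_n :=
  [set s | 2^-1 * (s^T *m A *m s) ord0 ord0 + (b^T *m s) ord0 ord0 + c = 0].

Definition contains_line (R : realType) (n : nat) (S : set 'cV[R]_n) : Prop :=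
  exists (p v : 'cV[R]_n), v != 0 /\ forall lam : R, S (p + lam *: v).

(* H^s(E) = 0 for the s-dimensional Hausdorff measure on R^n (Euclidean metric):
   for every delta > 0 the delta-approximating content H^s_delta(E) is 0, i.e.
   for every eps > 0 there is a countable cover of E by sets U_i of diameter
   at most d_i < delta with sum_i d_i^s <= eps (the normalising constant of
   Hausdorff measure is irrelevant for null sets). *)
Definition hausdorff_null (R : realType) (n s : nat) (E : set 'cV[R]_n) : Prop :=
  forall delta eps : R, 0 < delta -> 0 < eps ->
  exists (U : nat -> set 'cV[R]_n) (d : nat -> R),
    E `<=` \bigcup_i U i /\
    (forall i, 0 <= d i /\ d i < delta) /\
    (forall i x y, U i x -> U i y ->
        \sum_(j < n) (x j ord0 - y j ord0) ^+ 2 <= d i ^+ 2) /\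
    (forall N, \sum_(i < N) d i ^+ s < eps).

(* Conditions for a parameterisation of R^{k+1} by k parameters.
   Component sigma_1 is index ord0; sigma_{j+2} is index (lift ord0 j). *)
Definition normalized (R : realType) (k : nat) (f : 'cV[R]_k -> 'cV[R]_k.+1)
    (t : 'cV[R]_k) : 'cV[R]_k :=
  \col_(j < k) (f t (lift ord0 j) ord0 / f t ord0 ord0).

Definition hyperplane_cond (R : realType) (m n : nat) (f : 'cV[R]_m -> 'cV[R]_n)
    (O : set 'cV[R]_m) : Prop :=
  ~ exists (a : 'cV[R]_n) (beta : R),
      a != 0 /\ forall t, O t -> (a^T *m f t) ord0 ord0 = beta.

Definition inner_point_cond (R : realType) (k : nat) (f : 'cV[R]_k -> 'cV[R]_k.+1)
    (O : set 'cV[R]_k) : Prop :=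
  exists t, O t /\ interior (normalized f @` O) (normalized f t).

(* Main.v *)
Require Import Defs.
From HB Require Import structures.
From mathcomp Require Import all_boot all_order all_algebra.
From mathcomp Require Import all_classical all_reals all_analysis.
From mathcomp Require Import ring lra.
Set Implicit Arguments. Unset Strict Implicit. Unset Printing Implicit Defensive.
Import Order.TTheory GRing.Theory Num.Theory.
Import numFieldNormedType.Exports.
Local Open Scope classical_set_scope.
Local Open Scope ring_scope.

Section Alg.
Variable R : realType.

Definition dotp n (a x : 'cV[R]_n) : R := \sum_i a i ord0 * x i ord0.
Definition qf n (A : 'M[R]_n) (x y : 'cV[R]_n) : R :=
  \sum_i \sum_j x i ord0 * A i j * y j ord0.

Lemma dotpE n (a x : 'cV[R]_n) : (a^T *m x) ord0 ord0 = dotp a x.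
Proof. by rewrite mxE; apply: eq_bigr => i _; rewrite mxE. Qed.

Lemma qfE n (A : 'M[R]_n) x : (x^T *m A *m x) ord0 ord0 = qf A x x.
Proof.
rewrite mxE /qf exchange_big /=; apply: eq_bigr => j _.
rewrite mxE mulr_suml; apply: eq_bigr => i _; by rewrite mxE.
Qed.

Lemma dotpDr n (a x y : 'cV[R]_n) : dotp a (x + y) = dotp a x + dotp a y.
Proof. rewrite /dotp -big_split; apply: eq_bigr => i _; rewrite !mxE /=; ring. Qed.
Lemma dotpZr n (a x : 'cV[R]_n) l : dotp a (l *: x) = l * dotp a x.
Proof. rewrite /dotp mulr_sumr; apply: eq_bigr => i _; rewrite !mxE /=; ring. Qed.
Lemma dotpNr n (a x : 'cV[R]_n) : dotp a (- x) = - dotp a x.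
Proof. rewrite /dotp -sumrN; apply: eq_bigr => i _; rewrite !mxE /=; ring. Qed.
Lemma dotpBr n (a x y : 'cV[R]_n) : dotp a (x - y) = dotp a x - dotp a y.
Proof. by rewrite dotpDr dotpNr. Qed.
Lemma dotpC n (a x : 'cV[R]_n) : dotp a x = dotp x a.
Proof. by apply: eq_bigr => i _; rewrite mulrC. Qed.

Lemma qfDl n (A : 'M[R]_n) x y z : qf A (x + y) z = qf A x z + qf A y z.
Proof.
rewrite /qf -big_split; apply: eq_bigr => i _; rewrite /= -big_split.
apply: eq_bigr => j _; rewrite !mxE /=; ring.
Qed.
Lemma qfDr n (A : 'M[R]_n) x y z : qf A z (x + y) = qf A z x + qf A z y.
Proof.
rewrite /qf -big_split; apply: eq_bigr => i _; rewrite /= -big_split.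
apply: eq_bigr => j _; rewrite !mxE /=; ring.
Qed.
Lemma qfZl n (A : 'M[R]_n) x y l : qf A (l *: x) y = l * qf A x y.
Proof.
rewrite /qf mulr_sumr; apply: eq_bigr => i _; rewrite mulr_sumr.
apply: eq_bigr => j _; rewrite !mxE /=; ring.
Qed.
Lemma qfZr n (A : 'M[R]_n) x y l : qf A x (l *: y) = l * qf A x y.
Proof.
rewrite /qf mulr_sumr; apply: eq_bigr => i _; rewrite mulr_sumr.
apply: eq_bigr => j _; rewrite !mxE /=; ring.
Qed.
Lemma qfNl n (A : 'M[R]_n) x y : qf A (- x) y = - qf A x y.
Proof. by rewrite -scaleN1r qfZl mulN1r. Qed.
Lemma qfNr n (A : 'M[R]_n) x y : qf A x (- y) = - qf A x y.
Proof. by rewrite -scaleN1r qfZr mulN1r. Qed.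
Lemma qfC n (A : 'M[R]_n) x y : A^T = A -> qf A x y = qf A y x.
Proof.
move=> sA; rewrite /qf exchange_big /=; apply: eq_bigr => i _.
apply: eq_bigr => j _.
have -> : A j i = A^T i j by rewrite mxE.
rewrite sA; ring.
Qed.

Definition qq n (A : 'M[R]_n) b c (s : 'cV[R]_n) := 2^-1 * qf A s s + dotp b s + c.

Lemma quadricE n (A : 'M[R]_n) b c s : quadric A b c s <-> qq A b c s = 0.
Proof. by rewrite /quadric /qq /= qfE dotpE. Qed.

Definition gg n (A : 'M[R]_n) b (p : 'cV[R]_n) := A *m p + b.

Lemma dotp_Amul n (A : 'M[R]_n) p v : dotp (A *m p) v = qf A v p.
Proof.
rewrite /dotp /qf; apply: eq_bigr => i _; rewrite mxE mulr_suml.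
by apply: eq_bigr => j _; rewrite /= mulrC mulrA.
Qed.

Lemma dotp_gg n (A : 'M[R]_n) b p v : A^T = A ->
  dotp (gg A b p) v = qf A p v + dotp b v.
Proof.
move=> sA; rewrite /gg dotpC dotpDr dotpC dotp_Amul qfC //; congr (_ + _).
exact: dotpC.
Qed.

Lemma qq_shift n (A : 'M[R]_n) b c p v : A^T = A ->
  qq A b c (p + v) = qq A b c p + dotp (gg A b p) v + 2^-1 * qf A v v.
Proof.
move=> sA; rewrite dotp_gg // /qq !qfDl !qfDr dotpDr (qfC v p) //; by field.
Qed.


Lemma line_in n (A : 'M[R]_n) b c p w : A^T = A -> qq A b c p = 0 ->
  dotp (gg A b p) w = 0 -> qf A w w = 0 ->
  forall l : R, quadric A b c (p + l *: w).
Proof.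
move=> sA qp gw ww l; apply/quadricE.
by rewrite qq_shift // dotpZr qfZl qfZr gw ww qp; ring.
Qed.

Lemma noline n (A : 'M[R]_n) b c p w : A^T = A -> ~ contains_line (quadric A b c) ->
  qq A b c p = 0 -> w != 0 -> dotp (gg A b p) w = 0 -> qf A w w = 0 -> False.
Proof.
move=> sA nl qp w0 gw ww; apply: nl; exists p, w; split => //.
exact: line_in.
Qed.

End Alg.

Section Poly.
Variables (R : realType) (m : nat).
Implicit Types (P Q : mpolyfun R m) (t : 'cV[R]_m).

Definition pconst (a : R) : mpolyfun R m := [:: (a, [ffun _ => 0%N])].
Definition pvar (j : 'I_m) : mpolyfun R m := [:: (1, [ffun i => (i == j) : nat])].
Definition padd P Q : mpolyfun R m := P ++ Q.
Definition pmul P Q : mpolyfun R m :=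
  [seq (x.1 * y.1, [ffun i => (x.2 i + y.2 i)%N]) | x : R * {ffun 'I_m -> nat} <- P, y : R * {ffun 'I_m -> nat} <- Q].

Lemma peval_const a t : peval (pconst a) t = a.
Proof.
rewrite /peval big_seq1 /= big1 ?mulr1 // => i _; by rewrite ffunE expr0.
Qed.

Lemma peval_var j t : peval (pvar j) t = t j ord0.
Proof.
rewrite /peval big_seq1 /= mul1r (bigD1 j) //= ffunE eqxx expr1 big1 ?mulr1 //.
by move=> i /negbTE ij; rewrite ffunE ij expr0.
Qed.

Lemma peval_add P Q t : peval (padd P Q) t = peval P t + peval Q t.
Proof. by rewrite /peval big_cat. Qed.

Lemma peval_nil t : peval [::] t = 0.
Proof. by rewrite /peval big_nil. Qed.

Lemma peval_mul P Q t : peval (pmul P Q) t = peval P t * peval Q t.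
Proof.
rewrite /peval /pmul big_allpairs_dep /= mulr_suml; apply: eq_bigr => x _.
rewrite mulr_sumr; apply: eq_bigr => y _ /=.
rewrite (_ : \prod_(i < m) t i ord0 ^+ [ffun i => (x.2 i + y.2 i)%N] i =
  (\prod_(i < m) t i ord0 ^+ x.2 i) * \prod_(i < m) t i ord0 ^+ y.2 i).
  ring.
rewrite -big_split; apply: eq_bigr => i _; by rewrite ffunE exprD.
Qed.

Definition psum (I : finType) (F : I -> mpolyfun R m) : mpolyfun R m :=
  \big[padd/[::]]_(i : I) F i.

Lemma peval_sum (I : finType) (F : I -> mpolyfun R m) t :
  peval (psum F) t = \sum_(i : I) peval (F i) t.
Proof.
rewrite /psum (big_morph (fun P => peval P t) (fun P Q => peval_add P Q t) (peval_nil t)).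
by [].
Qed.

End Poly.
Arguments padd : simpl never.
Arguments pconst : simpl never.
Arguments pmul : simpl never.
Arguments psum : simpl never.

Section Topo.
Variable R : realType.

Definition cvgc {T : Type} (F : set_system T) n (G : T -> 'cV[R]_n) (x : 'cV[R]_n) :=
  forall i, (fun y => G y i ord0) @ F --> x i ord0.

Lemma cvg_sumR {T : Type} (F : set_system T) {FF : Filter F} (I : Type) (s : seq I)
  (f : I -> T -> R) (a : I -> R) :
  (forall i, f i @ F --> a i) ->
  (fun y => \sum_(i <- s) f i y) @ F --> \sum_(i <- s) a i.
Proof.
move=> h; elim: s => [|i s IH].
  under eq_fun do rewrite big_nil.
  rewrite big_nil; exact: cvg_cst.
under eq_fun do rewrite big_cons.
rewrite big_cons; exact: cvgD.
Qed.

Lemma cvg_dotp {T : Type} (F : set_system T) {FF : Filter F} n a (G : T -> 'cV[R]_n) x :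
  cvgc F G x -> (fun y => dotp a (G y)) @ F --> dotp a x.
Proof.
move=> h; apply: cvg_sumR => i; apply: cvgM; [exact: cvg_cst | exact: h].
Qed.

Lemma cvg_qf {T : Type} (F : set_system T) {FF : Filter F} n (A : 'M[R]_n)
  (G H : T -> 'cV[R]_n) x z :
  cvgc F G x -> cvgc F H z -> (fun y => qf A (G y) (H y)) @ F --> qf A x z.
Proof.
move=> hG hH; apply: cvg_sumR => i; apply: cvg_sumR => j.
apply: cvgM; [apply: cvgM; [exact: hG | exact: cvg_cst] | exact: hH].
Qed.

Lemma cvgc_id n (x : 'cV[R]_n) : cvgc (nbhs x) id x.
Proof. by move=> i; apply: (@coord_continuous R n 1 i ord0 x). Qed.

Lemma near_cvgc {T : Type} (F : set_system T) {FF : Filter F} n (G : T -> 'cV[R]_n) x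
  (O : set 'cV[R]_n) : cvgc F G x -> nbhs x O -> \forall y \near F, O (G y).
Proof.
move=> h [P hP sub].
apply: (filterS (P := fun y => forall i j, P i j (G y i j))).
  by move=> y hy; apply: sub => i j; exact: hy.
apply: filter_forall => i; apply: filter_forall => j.
rewrite (ord1 j); exact: (h i _ (hP i ord0)).
Qed.

Lemma near_neq0 {T : Type} (F : set_system T) {FF : Filter F} (f : T -> R) a :
  f @ F --> a -> a != 0 -> \forall y \near F, f y != 0.
Proof.
move=> h a0.
have h2 : (fun y => f y * a) @ F --> a * a by apply: cvgM => //; exact: cvg_cst.
have : 0 < a * a by rewrite -expr2 exprn_even_gt0.
move=> /(cvgr_gt _ h2); apply: filterS => y /= hy.
by apply/eqP => f0; move: hy; rewrite f0 mul0r ltxx.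
Qed.

End Topo.

Section Param.
Variables (R : realType) (k : nat) (A : 'M[R]_k.+1) (b : 'cV[R]_k.+1) (c : R).
Hypothesis sA : A^T = A.
Variables (p : 'cV[R]_k.+1) (i0 : 'I_k.+1).
Definition gp := gg A b p.
Definition ga := gp i0 ord0.
Hypothesis hga : ga != 0.

Lemma sum_lift (F : 'I_k.+1 -> R) : \sum_i F i = F i0 + \sum_j F (lift i0 j).
Proof. by rewrite (bigD1_ord i0). Qed.

Definition SS (t : 'cV[R]_k) := \sum_j t j ord0 * gp (lift i0 j) ord0 / ga.
Definition vv (t : 'cV[R]_k) : 'cV[R]_k.+1 :=
  \col_i oapp (fun j => t j ord0) (1 - SS t) (unlift i0 i).
Definition WW (t : 'cV[R]_k) : 'cV[R]_k.+1 :=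
  \col_i oapp (fun j => t j ord0) (- SS t) (unlift i0 i).

Lemma SS_lin t h e : SS (t + h *: e) = SS t + h * SS e.
Proof.
rewrite /SS mulr_sumr -big_split; apply: eq_bigr => j _; rewrite !mxE /=.
by field.
Qed.

Lemma vv_lin t h e : vv (t + h *: e) = vv t + h *: WW e.
Proof.
apply/matrixP => i j; rewrite !mxE; case: (unlift i0 i) => [j'|] /=.
  by rewrite !mxE.
rewrite SS_lin; ring.
Qed.

Lemma sumS (t : 'cV[R]_k) : \sum_j gp (lift i0 j) ord0 * t j ord0 = ga * SS t.
Proof.
rewrite /SS mulr_sumr; apply: eq_bigr => j _; by field.
Qed.

Lemma dotp_vv t : dotp gp (vv t) = ga.
Proof.
rewrite /dotp sum_lift /vv mxE unlift_none /=.
under eq_bigr do rewrite mxE liftK /=.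
rewrite sumS /ga; ring.
Qed.

Lemma dotp_WW t : dotp gp (WW t) = 0.
Proof.
rewrite /dotp sum_lift /WW mxE unlift_none /=.
under eq_bigr do rewrite mxE liftK /=.
rewrite sumS /ga; ring.
Qed.

Definition QQ t := qf A (vv t) (vv t).
Definition sig t := p + (- 2 * ga / QQ t) *: vv t.

Lemma sig_in t : qq A b c p = 0 -> QQ t != 0 -> quadric A b c (sig t).
Proof.
move=> qp Qt; apply/quadricE; rewrite /sig qq_shift // qp dotpZr qfZl qfZr.
rewrite dotp_vv -/(QQ t); by field.
Qed.

Definition TT (s : 'cV[R]_k.+1) : 'cV[R]_k :=
  \col_j ((s - p) (lift i0 j) ord0 * ga / dotp gp (s - p)).

Lemma vv_TT s : dotp gp (s - p) != 0 ->
  vv (TT s) = (ga / dotp gp (s - p)) *: (s - p).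
Proof.
move=> d0; apply/matrixP => i j; rewrite (ord1 j) /vv mxE [RHS]mxE.
have hs : \sum_j0 gp (lift i0 j0) ord0 * (s - p) (lift i0 j0) ord0 =
   dotp gp (s - p) - ga * (s - p) i0 ord0.
  by rewrite /dotp sum_lift /ga; ring.
have o : (0 : 'I_1) = ord0 by apply/val_inj.
rewrite ?o.
case: (unliftP i0 i) => [j' ->|->] /=.
  by rewrite [TT s _ _]mxE; field; rewrite ?d0 ?hga.
rewrite /SS.
have -> : \sum_j0 TT s j0 ord0 * gp (lift i0 j0) ord0 / ga =
   (\sum_j0 gp (lift i0 j0) ord0 * (s - p) (lift i0 j0) ord0) / dotp gp (s - p).
  rewrite mulr_suml; apply: eq_bigr => j0 _; rewrite [TT s _ _]mxE.
  by field; rewrite ?d0 ?hga.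
rewrite hs; by field; rewrite ?d0 ?hga.
Qed.

Lemma TT_inv s : ~ contains_line (quadric A b c) -> qq A b c p = 0 ->
  qq A b c s = 0 -> s != p -> QQ (TT s) != 0 /\ sig (TT s) = s.
Proof.
move=> nl qp qs sp.
have e : s = p + (s - p) by rewrite addrC subrK.
have v0 : s - p != 0 by rewrite subr_eq0.
have h : dotp gp (s - p) + 2^-1 * qf A (s - p) (s - p) = 0.
  by move: qs; rewrite {1}e qq_shift // qp add0r.
have d0 : dotp gp (s - p) != 0.
  apply/negP => /eqP d0; apply: (noline sA nl qp v0 d0).
  move: h; rewrite d0 add0r => /eqP; rewrite mulf_eq0 invr_eq0 => /orP[|/eqP//].
  by rewrite pnatr_eq0.
have hq : qf A (s - p) (s - p) = - 2 * dotp gp (s - p).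
  have : 2 * (dotp gp (s - p) + 2^-1 * qf A (s - p) (s - p)) = 0 by rewrite h mulr0.
  move=> /eqP; rewrite -subr_eq0 => /eqP h2; rewrite -[LHS]subr0 -h2; by field.
have hQ : QQ (TT s) = (ga / dotp gp (s - p)) ^+ 2 * (- 2 * dotp gp (s - p)).
  by rewrite /QQ vv_TT // qfZl qfZr hq; ring.
have Q0 : QQ (TT s) != 0.
  rewrite hQ mulf_neq0 // ?expf_neq0 ?mulf_neq0 ?invr_neq0 //.
split => //.
rewrite /sig vv_TT // scalerA hQ.
have -> : - 2 * ga / ((ga / dotp gp (s - p)) ^+ 2 * (- 2 * dotp gp (s - p))) *
   (ga / dotp gp (s - p)) = 1.
  by field; rewrite d0 hga.
by rewrite scale1r addrC subrK.
Qed.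



Definition Pv (i : 'I_k.+1) : mpolyfun R k :=
  match unlift i0 i with
  | Some j => pvar R j
  | None => padd (pconst k 1) (psum (fun j => pmul (pconst k (- (gp (lift i0 j) ord0 / ga))) (pvar R j)))
  end.

Lemma peval_Pv i t : peval (Pv i) t = vv t i ord0.
Proof.
rewrite /Pv /vv mxE; case: (unlift i0 i) => [j|] /=; first exact: peval_var.
rewrite peval_add peval_const peval_sum /SS -sumrN; congr (_ + _).
apply: eq_bigr => j _; rewrite peval_mul peval_const peval_var; ring.
Qed.

Definition PQ : mpolyfun R k :=
  psum (fun i => psum (fun j => pmul (pmul (Pv i) (pconst k (A i j))) (Pv j))).

Lemma peval_PQ t : peval PQ t = QQ t.
Proof.
rewrite /PQ /QQ /qf peval_sum; apply: eq_bigr => i _.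
rewrite peval_sum; apply: eq_bigr => j _.
by rewrite !peval_mul peval_const !peval_Pv.
Qed.

Definition rsig : ratvecfun R k k.+1 :=
  RatVecFun (fun i => padd (pmul (pconst k (p i ord0)) PQ) (pmul (pconst k (- 2 * ga)) (Pv i)))
            (fun _ => PQ).

Lemma rveval_sig t : QQ t != 0 -> rveval rsig t = sig t.
Proof.
move=> Q0; apply/matrixP => i j; rewrite (ord1 j) !mxE /=.
rewrite peval_add !peval_mul !peval_const peval_PQ peval_Pv /vv mxE.
have o : (0 : 'I_1) = ord0 by apply/val_inj.
rewrite ?o; by field.
Qed.

Lemma cvgc_subc {T : Type} (F : set_system T) {FF : Filter F} n (G : T -> 'cV[R]_n) x q :
  cvgc F G x -> cvgc F (fun y => G y - q) (x - q).
Proof.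
move=> h i; under eq_fun do rewrite !mxE; rewrite !mxE.
apply: cvgB; [exact: h | exact: cvg_cst].
Qed.

Lemma cvgc_vv {T : Type} (F : set_system T) {FF : Filter F} (G : T -> 'cV[R]_k) t :
  cvgc F G t -> cvgc F (fun y => vv (G y)) (vv t).
Proof.
move=> h i; rewrite /vv; under eq_fun do rewrite mxE; rewrite mxE.
case: (unlift i0 i) => [j|] /=; first exact: h.
apply: cvgB; first exact: cvg_cst.
rewrite /SS; apply: cvg_sumR => j.
apply: cvgM; [apply: cvgM; [exact: h | exact: cvg_cst] | exact: cvg_cst].
Qed.

Lemma cvgc_TT {T : Type} (F : set_system T) {FF : Filter F} (G : T -> 'cV[R]_k.+1) s :
  cvgc F G s -> dotp gp (s - p) != 0 -> cvgc F (fun y => TT (G y)) (TT s).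
Proof.
move=> h d0 j; rewrite /TT; under eq_fun do rewrite mxE; rewrite mxE.
have hs : cvgc F (fun y => G y - p) (s - p) by exact: cvgc_subc.
apply: cvgM; [apply: cvgM; [exact: hs | exact: cvg_cst] |].
apply: cvgV => //; exact: cvg_dotp.
Qed.

Lemma open_ball_cV n (O : set 'cV[R]_n) t0 : open O -> O t0 ->
  exists2 eps : R, 0 < eps & forall t : 'cV[R]_n, (forall j, `|t0 j ord0 - t j ord0| < eps) -> O t.
Proof.
rewrite openE => oO Ot0; have := oO t0 Ot0.
move=> /nbhs_ballP [e e0 H]; exists e => // t ht; apply: H.
split => // i j; rewrite (ord1 j); exact: ht.
Qed.

Lemma sum_delta (j : 'I_k) (F : 'I_k -> R) :
  \sum_j' (delta_mx j ord0 : 'cV[R]_k) j' ord0 * F j' = F j.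
Proof.
rewrite (bigD1 j) //= mxE !eqxx mul1r big1 ?addr0 // => j' /negbTE h.
by rewrite mxE h mul0r.
Qed.

Lemma QQ_lin t0 s e : QQ (t0 + s *: e) =
  QQ t0 + 2 * s * qf A (vv t0) (WW e) + s ^+ 2 * qf A (WW e) (WW e).
Proof.
rewrite /QQ vv_lin !qfDl !qfDr !qfZl !qfZr (qfC (WW e) (vv t0)) //; ring.
Qed.

Lemma dotp_vv_lin a t0 s e : dotp a (vv (t0 + s *: e)) = dotp a (vv t0) + s * dotp a (WW e).
Proof. by rewrite vv_lin dotpDr dotpZr. Qed.

Lemma dotp_WW_delta a j :
  dotp a (WW (delta_mx j ord0)) = a (lift i0 j) ord0 - a i0 ord0 * (gp (lift i0 j) ord0 / ga).
Proof.
rewrite /dotp sum_lift /WW mxE unlift_none /=.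
under eq_bigr do rewrite mxE liftK /=.
rewrite /SS.
under eq_bigr do rewrite mulrC.
rewrite sum_delta.
under [X in _ * - X]eq_bigr do rewrite -mulrA.
rewrite sum_delta; ring.
Qed.

Lemma dotp_vv_gen a t : dotp a (vv t) =
  a i0 ord0 * (1 - SS t) + \sum_j a (lift i0 j) ord0 * t j ord0.
Proof.
rewrite /dotp sum_lift /vv mxE unlift_none /=; congr (_ + _).
by apply: eq_bigr => j _; rewrite mxE liftK.
Qed.

Lemma WW_delta_neq0 j : WW (delta_mx j ord0) != 0.
Proof.
apply/negP => /eqP /matrixP /(_ (lift i0 j) ord0).
by rewrite !mxE liftK /= !mxE !eqxx => /eqP; rewrite oner_eq0.
Qed.

Lemma hyper (kpos : (0 < k)%N) (nl : ~ contains_line (quadric A b c))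
  (qp : qq A b c p = 0) (O : set 'cV[R]_k) t0 :
  open O -> O t0 -> (forall t, O t -> QQ t != 0) -> forall a beta, a != 0 ->
  (forall t, O t -> dotp a (sig t) = beta) -> False.
Proof.
move=> oO Ot0 OQ a beta a0 hb.
have [eps eps0 hO] := open_ball_cV oO Ot0.
pose h := eps / 2.
have h0 : 0 < h by rewrite divr_gt0.
have hlt : h < eps by rewrite /h ltr_pdivrMr // ltr_pMr // ltr1n.
clearbody h.
have Oe : forall j s, `|s| <= h -> O (t0 + s *: delta_mx j ord0).
  move=> j s hs; apply: hO => j'; rewrite !mxE.
  rewrite opprD addrA subrr add0r normrN normrM.
  apply: (le_lt_trans _ hlt); apply: (le_trans _ hs).
  rewrite -[leRHS]mulr1 ler_wpM2l //.
  by case: (j' == j); rewrite /= ?normr1 ?normr0.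
pose c0 := dotp a p - beta.
have hh : `|h| <= h by rewrite ger0_norm // ltW.
have hmh : `|- h| <= h by rewrite normrN.
have key : forall t, O t -> c0 * QQ t = 2 * ga * dotp a (vv t).
  move=> t Ot; have := hb t Ot; rewrite /sig dotpDr dotpZr => e.
  have Q0 := OQ t Ot.
  rewrite /c0 -e; by field.
pose j0 := Ordinal kpos.
have [c00|c00] := eqVneq c0 0.
  have L0 : forall t, O t -> dotp a (vv t) = 0.
    move=> t Ot; have := key t Ot; rewrite c00 mul0r => /eqP.
    by rewrite eq_sym !mulf_eq0 pnatr_eq0 (negbTE hga) /= => /eqP.
  have kap : forall j, a (lift i0 j) ord0 - a i0 ord0 * (gp (lift i0 j) ord0 / ga) = 0.
    move=> j; have := L0 _ (Oe j h hh).
    rewrite dotp_vv_lin L0 // add0r dotp_WW_delta => /eqP.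
    by rewrite mulf_eq0 gt_eqF //= => /eqP.
  have ai0 : a i0 ord0 = 0.
    have := L0 _ Ot0; rewrite dotp_vv_gen.
    have -> : \sum_j a (lift i0 j) ord0 * t0 j ord0 = a i0 ord0 * SS t0.
      rewrite /SS mulr_sumr; apply: eq_bigr => j _.
      move/eqP: (kap j); rewrite subr_eq0 => /eqP ->; ring.
    by move=> e; rewrite -e; ring.
  move/negP: a0; apply; apply/eqP/matrixP => i j; rewrite (ord1 j) mxE.
  case: (unliftP i0 i) => [j' ->|->] //.
  by have := kap j'; rewrite ai0 mul0r subr0.
pose w := WW (delta_mx j0 ord0).
have E := fun s (hs : `|s| <= h) => key _ (Oe j0 s hs).
have Ep := E h hh.
have Em := E (- h) hmh.
have E0 := key _ Ot0.
rewrite QQ_lin dotp_vv_lin in Ep; rewrite QQ_lin dotp_vv_lin in Em.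
have K0 : qf A w w = 0.
  have : c0 * (2 * h ^+ 2 * qf A w w) = 0.
    have -> : c0 * (2 * h ^+ 2 * qf A w w) =
      c0 * (QQ t0 + 2 * h * qf A (vv t0) w + h ^+ 2 * qf A w w) +
      c0 * (QQ t0 + 2 * - h * qf A (vv t0) w + (- h) ^+ 2 * qf A w w) -
      2 * (c0 * QQ t0) by ring.
    rewrite Ep Em E0; ring.
  move=> /eqP; rewrite !mulf_eq0 (negbTE c00) pnatr_eq0 (gt_eqF h0) /=.
  by move=> /eqP.
exact: (noline sA nl qp (WW_delta_neq0 j0) (dotp_WW _) K0).
Qed.

Lemma dotp_sig t : QQ t != 0 -> dotp gp (sig t - p) = - 2 * ga / QQ t * ga.
Proof. by move=> Q0; rewrite /sig addrC addKr dotpZr dotp_vv. Qed.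

Lemma dotp_sig_neq0 t : QQ t != 0 -> dotp gp (sig t - p) != 0.
Proof.
move=> Q0; rewrite dotp_sig // !mulf_neq0 ?invr_neq0 //.
Qed.

Lemma TT_sig t : QQ t != 0 -> TT (sig t) = t.
Proof.
move=> Q0; have d0 := dotp_sig_neq0 Q0.
apply/matrixP => j j'; rewrite (ord1 j') /TT mxE dotp_sig //.
rewrite /sig addrC addKr !mxE liftK /=.
have o : (0 : 'I_1) = ord0 by apply/val_inj.
rewrite ?o; field.
by rewrite Q0 hga.
Qed.

Lemma cvg_qq {T : Type} (F : set_system T) {FF : Filter F} (G : T -> 'cV[R]_k.+1) x :
  cvgc F G x -> (fun y => qq A b c (G y)) @ F --> qq A b c x.
Proof.
move=> h; apply: cvgD; last exact: cvg_cst.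
apply: cvgD; last exact: cvg_dotp.
apply: cvgM; [exact: cvg_cst | exact: cvg_qf].
Qed.

Definition UU (mu : R) (r : 'cV[R]_k) : 'cV[R]_k.+1 :=
  \col_i oapp (fun j => mu * r j ord0) mu (unlift ord0 i).

Lemma UU_scale mu r : UU mu r = mu *: UU 1 r.
Proof.
apply/matrixP => i j; rewrite !mxE; case: (unlift ord0 i) => [j'|] /=; ring.
Qed.

Definition ZZ (z : 'cV[R]_k.+1) := UU (z ord0 ord0) (\col_j z (lift ord0 j) ord0).

Lemma ZZE z i : ZZ z i ord0 =
  oapp (fun j => z ord0 ord0 * z (lift ord0 j) ord0) (z ord0 ord0) (unlift ord0 i).
Proof. by rewrite /ZZ /UU !mxE; case: unlift => //= j; rewrite mxE. Qed.

Lemma cvgc_ZZ z0 : cvgc (nbhs z0) ZZ (ZZ z0).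
Proof.
move=> i; rewrite (funext (fun z => ZZE z i)) ZZE.
have h : cvgc (nbhs z0) id z0 by exact: cvgc_id.
case: (unlift ord0 i) => [j|] /=; last exact: h.
apply: cvgM; exact: h.
Qed.

Lemma cvgc_UU_r mu r0 : cvgc (nbhs r0) (UU mu) (UU mu r0).
Proof.
move=> i; rewrite /UU; under eq_fun do rewrite !mxE; rewrite !mxE.
case: (unlift ord0 i) => [j|] /=; last exact: cvg_cst.
apply: cvgM; [exact: cvg_cst | exact: cvgc_id].
Qed.

Lemma cvgc_UU_mu r mu0 : cvgc (nbhs mu0) (UU^~ r) (UU mu0 r).
Proof.
move=> i; rewrite /UU; under eq_fun do rewrite !mxE; rewrite !mxE.
case: (unlift ord0 i) => [j|] /=; last exact: cvg_id.
apply: cvgM; [exact: cvg_id | exact: cvg_cst].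
Qed.

Lemma nbhs_open_pt n (O : set 'cV[R]_n) t : open O -> O t -> nbhs t O.
Proof. by rewrite openE => oO Ot; exact: oO. Qed.

Lemma mx_ball_of n (z0 z : 'cV[R]_n) e : 0 < e ->
  (forall i, `|z0 i ord0 - z i ord0| < e) -> ball z0 e z.
Proof. by move=> e0 h; split => // i j; rewrite (ord1 j); exact: h. Qed.

Lemma ball_mx_of n (z0 z : 'cV[R]_n) e : ball z0 e z -> forall i, `|z0 i ord0 - z i ord0| < e.
Proof. by case=> _ h i; exact: h. Qed.

Lemma sign_lemma (h d K : R) : 0 < h -> h * (`|K| + 1) <= `|d| -> d != 0 ->
  0 < (h * d + 2^-1 * h ^+ 2 * K) * d /\ ((- h) * d + 2^-1 * (- h) ^+ 2 * K) * d < 0.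
Proof.
move=> h0 hK d0.
have dd : 0 < d * d by rewrite -expr2 exprn_even_gt0.
have ad : `|d| * `|d| = d * d by rewrite -normrM ger0_norm // ltW.
have X : `|h * K * d| <= d * d.
  rewrite !normrM (ger0_norm (ltW h0)) -ad ler_wpM2r //.
  apply: le_trans hK; rewrite mulrDr mulr1 lerDl; exact: ltW.
move: X; rewrite ler_norml => /andP [X1 X2].
split; nra.
Qed.

Lemma inner (nl : ~ contains_line (quadric A b c)) (qp : qq A b c p = 0)
  (O : set 'cV[R]_k) t0 :
  open O -> O t0 -> (forall t, O t -> QQ t != 0) -> sig t0 ord0 ord0 != 0 ->
  dotp b (sig t0) + 2 * c != 0 ->
  interior (normalized (rveval rsig) @` O) (normalized (rveval rsig) t0).
Proof.
move=> oO Ot0 OQ mu00 good.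
have Q00 := OQ _ Ot0.
pose s0 := sig t0; pose mu0 := s0 ord0 ord0.
pose r0 : 'cV[R]_k := \col_j (s0 (lift ord0 j) ord0 / mu0).
have Nt : forall t, QQ t != 0 ->
    normalized (rveval rsig) t = \col_j (sig t (lift ord0 j) ord0 / sig t ord0 ord0).
  by move=> t Qt; rewrite /normalized rveval_sig.
rewrite Nt //= -/s0 -/r0.
have hs0 : qq A b c s0 = 0 by apply/quadricE; exact: sig_in.
have US : UU mu0 r0 = s0.
  apply/matrixP => i j; rewrite (ord1 j) [LHS]mxE.
  case: (unliftP ord0 i) => [j' ->|->] /=; last by [].
  by rewrite /r0 mxE; field; exact: mu00.
pose z0 : 'cV[R]_k.+1 := \col_i oapp (fun j => r0 j ord0) mu0 (unlift ord0 i).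
have Zz0 : ZZ z0 = s0.
  rewrite -US /ZZ; congr UU; first by rewrite mxE unlift_none.
  by apply/matrixP => j j'; rewrite (ord1 j') mxE [z0 _ _]mxE liftK.
have d0 : dotp gp (s0 - p) != 0 by exact: dotp_sig_neq0.
have W1 : \forall z \near z0, O (TT (ZZ z)).
  have hc : cvgc (nbhs z0) (fun z => TT (ZZ z)) (TT (ZZ z0)).
    apply: cvgc_TT; [exact: cvgc_ZZ | by rewrite Zz0].
  have hn : nbhs (TT (ZZ z0)) O by rewrite Zz0 TT_sig //; exact: nbhs_open_pt.
  exact: (near_cvgc hc hn).
have W2 : \forall z \near z0, dotp gp (ZZ z - p) != 0.
  have hc : (fun z => dotp gp (ZZ z - p)) @ nbhs z0 --> dotp gp (ZZ z0 - p).
    apply: cvg_dotp; apply: cvgc_subc; exact: cvgc_ZZ.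
  apply: (near_neq0 hc); by rewrite Zz0.
have [eps1 eps10 hW] : exists2 e : R, 0 < e & forall z, ball z0 e z ->
    O (TT (ZZ z)) /\ dotp gp (ZZ z - p) != 0.
  have : nbhs z0 (fun z => O (TT (ZZ z)) /\ dotp gp (ZZ z - p) != 0) by exact: filterI W1 W2.
  move=> /nbhs_ballP [e e0 he].
  by exists e => // z /he.
pose u1 := UU 1 r0.
have s0u : s0 = mu0 *: u1 by rewrite -US UU_scale.
have u1e : u1 = mu0^-1 *: s0 by rewrite s0u scalerA mulVf // scale1r.
pose K := qf A u1 u1; pose d := dotp (gg A b s0) u1.
have dne : d != 0.
  have hq : qf A s0 s0 = - 2 * (dotp b s0 + c).
    move: hs0; rewrite /qq => e.
    have -> : qf A s0 s0 = 2 * (2^-1 * qf A s0 s0 + dotp b s0 + c) - 2 * (dotp b s0 + c) by field.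
    by rewrite e mulr0 sub0r mulNr.
  rewrite /d u1e dotpZr dotp_gg // hq mulf_neq0 ?invr_neq0 //.
  have -> : - 2 * (dotp b s0 + c) + dotp b s0 = - (dotp b s0 + 2 * c) by ring.
  by rewrite oppr_eq0.
have fexp : forall hh, qq A b c (UU (mu0 + hh) r0) = hh * d + 2^-1 * hh ^+ 2 * K.
  move=> hh; rewrite UU_scale -/u1 scalerDl -s0u qq_shift // hs0 dotpZr qfZl qfZr.
  rewrite /K /d; ring.
pose h := Num.min (eps1 / 2) (Num.min (`|mu0| / 2) (`|d| / (`|K| + 1))).
have K1 : 0 < `|K| + 1 by rewrite ltr_pwDr.
have h0 : 0 < h.
  rewrite /h !lt_min !divr_gt0 ?normr_gt0 //.
have hl1 : h <= eps1 / 2 by rewrite /h ge_min lexx.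
have hl2 : h <= `|mu0| / 2 by rewrite /h !ge_min lexx orbT.
have hl3 : h <= `|d| / (`|K| + 1) by rewrite /h !ge_min lexx !orbT.
clearbody h.
have mu0p : 0 < `|mu0| by rewrite normr_gt0.
have h_eps : h < eps1 by apply: (le_lt_trans hl1); rewrite ltr_pdivrMr // ltr_pMr // ltr1n.
have h_mu : h < `|mu0| by apply: (le_lt_trans hl2); rewrite ltr_pdivrMr // ltr_pMr // ltr1n.
have hK : h * (`|K| + 1) <= `|d| by rewrite -ler_pdivlMr.
have [sp sm] := sign_lemma h0 hK dne.
rewrite -!fexp in sp sm.
have Cp : (fun r => qq A b c (UU (mu0 + h) r) * d) @ nbhs r0 -->
    qq A b c (UU (mu0 + h) r0) * d.
  apply: cvgM; [apply: cvg_qq; exact: cvgc_UU_r | exact: cvg_cst].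
have Cm : (fun r => qq A b c (UU (mu0 + - h) r) * d) @ nbhs r0 -->
    qq A b c (UU (mu0 + - h) r0) * d.
  apply: cvgM; [apply: cvg_qq; exact: cvgc_UU_r | exact: cvg_cst].
have Np := @cvgr_gt _ _ _ (nbhs_filter r0) _ _ Cp _ sp.
have Nm := @cvgr_lt _ _ _ (nbhs_filter r0) _ _ Cm _ sm.
have [eps2 eps20 hN] : exists2 e : R, 0 < e & forall r, ball r0 e r ->
    0 < qq A b c (UU (mu0 + h) r) * d /\ qq A b c (UU (mu0 + - h) r) * d < 0.
  have : nbhs r0 (fun r => 0 < qq A b c (UU (mu0 + h) r) * d /\
                           qq A b c (UU (mu0 + - h) r) * d < 0).
    by apply: filterS (filterI Np Nm) => r [] /= h1 h2.
  move=> /nbhs_ballP [e e0 he].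
  by exists e => // z /he.
have emin0 : 0 < Num.min eps1 eps2 by rewrite lt_min eps10.
apply/nbhs_ballP; exists (Num.min eps1 eps2) => // r hr.
have hr' := ball_mx_of hr.
have hr2 : ball r0 eps2 r.
  apply: mx_ball_of => // j; apply: (lt_le_trans (hr' j)); by rewrite ge_min lexx orbT.
have [sgp sgm] := hN r hr2.
pose phi := fun m => qq A b c (UU m r) * d.
have cphi : continuous phi.
  move=> x; apply: cvgM; [apply: cvg_qq; exact: cvgc_UU_mu | exact: cvg_cst].
have ab : mu0 + - h <= mu0 + h by rewrite lerD2l -subr_ge0 opprK -mulr2n mulrn_wge0 // ltW.
have hv : Num.min (phi (mu0 + - h)) (phi (mu0 + h)) <= 0 <= Num.max (phi (mu0 + - h)) (phi (mu0 + h)).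
  by rewrite ge_min le_max (ltW sgm) (ltW sgp) orbT.
have [mu muin phi0] := IVT ab (continuous_subspaceT cphi) hv.
have qmu : qq A b c (UU mu r) = 0.
  by move/eqP: phi0; rewrite /phi mulf_eq0 (negbTE dne) orbF => /eqP.
move: muin; rewrite in_itv /= => /andP [ml mu_].
have dmu : `|mu0 - mu| <= h.
  rewrite ler_norml; apply/andP; split; lra.
have munz : mu != 0.
  apply/eqP => m0; move: dmu; rewrite m0 subr0 => hm.
  by move: (le_lt_trans hm h_mu); rewrite ltxx.
pose z : 'cV[R]_k.+1 := \col_i oapp (fun j => r j ord0) mu (unlift ord0 i).
have Zz : ZZ z = UU mu r.
  rewrite /ZZ; congr UU; first by rewrite mxE unlift_none.
  by apply/matrixP => j j'; rewrite (ord1 j') mxE [z _ _]mxE liftK.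
have bz : ball z0 eps1 z.
  apply: mx_ball_of => // i; rewrite !mxE.
  case: (unlift ord0 i) => [j|] /=.
    apply: (lt_le_trans (hr' j)); by rewrite ge_min lexx.
  exact: le_lt_trans dmu h_eps.
have [Ot dn] := hW z bz; rewrite Zz in Ot dn.
have snp : UU mu r != p.
  by apply: contra dn => /eqP ->; rewrite subrr /dotp big1 // => i _; by rewrite [X in _ * X]mxE mulr0.
have [Qt st] := TT_inv nl qp qmu snp.
exists (TT (UU mu r)) => //.
rewrite Nt // st; apply/matrixP => j j'; rewrite (ord1 j') !mxE liftK unlift_none /=.
have o : (0 : 'I_1) = ord0 by apply/val_inj.
rewrite ?o; by field.
Qed.

Lemma good_point (kpos : (0 < k)%N) (nl : ~ contains_line (quadric A b c))
  (qp : qq A b c p = 0) (O : set 'cV[R]_k) t0 :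
  open O -> O t0 -> (forall t, O t -> QQ t != 0) ->
  exists t, O t /\ dotp b (sig t) + 2 * c != 0.
Proof.
move=> oO Ot0 OQ.
case: (pselect (exists t, O t /\ dotp b (sig t) + 2 * c != 0)) => // H.
exfalso.
have all : forall t, O t -> dotp b (sig t) = - 2 * c.
  move=> t Ot; case: (eqVneq (dotp b (sig t) + 2 * c) 0) => [e|ne].
    by apply/eqP; rewrite -subr_eq0 -e; apply/eqP; ring.
  by exfalso; apply: H; exists t.
case: (eqVneq b 0) => [b0|bn0]; last first.
  exact: (hyper kpos nl qp oO Ot0 OQ bn0 all).
have d0 : forall w : 'cV[R]_k.+1, dotp 0 w = 0.
  by move=> w; rewrite /dotp big1 // => i _; rewrite mxE mul0r.
have c0 : c = 0.
  have := all t0 Ot0; rewrite b0 d0 => e; lra.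
have q00 : qq A b c 0 = 0.
  rewrite /qq b0 c0 d0 /qf big1 ?mulr0 ?addr0 // => i _.
  by rewrite big1 // => j _; rewrite mxE !mul0r.
have g00 : gg A b 0 = 0 by rewrite /gg b0 mulmx0 addr0.
have Q00 := OQ t0 Ot0.
have sS : qq A b c (sig t0) = 0 by apply/quadricE; exact: sig_in.
have cone : forall w, w != 0 -> qq A b c w = 0 -> False.
  move=> w w0 qw; apply: (noline sA nl q00 w0); first by rewrite g00 d0.
  move: qw; rewrite /qq b0 c0 d0 addr0 addr0 => /eqP; rewrite mulf_eq0 invr_eq0 pnatr_eq0 /=.
  by move/eqP.
have sp : sig t0 - p != 0.
  apply/eqP => e; move: (dotp_sig_neq0 Q00); rewrite e /dotp big1 ?eqxx // => i _.
  by rewrite [X in _ * X]mxE mulr0.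
case: (eqVneq (sig t0) 0) => [s0|s0]; last exact: (cone _ s0 sS).
case: (eqVneq p 0) => [p0|p0]; last exact: (cone _ p0 qp).
by move: sp; rewrite s0 p0 subrr eqxx.
Qed.

End Param.

Lemma hn_single (R : realType) k (E : set 'cV[R]_k.+1) q : (0 < k)%N ->
  E `<=` [set q] -> hausdorff_null k E.
Proof.
move=> kpos sub delta eps d0 e0; exists (fun _ => [set q]), (fun _ => 0).
split; first by move=> x /sub ->; exists 0%N.
split; first by move=> i; rewrite lexx d0.
split; first by move=> i x y -> ->; rewrite expr0n /= big1 // => j _; rewrite subrr expr0n.
move=> N; rewrite big1 // => i _; rewrite expr0n; move: kpos; by case: (k).
Qed.

Unset Implicit Arguments.
Unset Strict Implicit.

Theorem theorem2 (R : realType) (k : nat) (A : 'M[R]_k.+1) (b : 'cV[R]_k.+1) (c : R) :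
  (1 <= k)%N -> A^T = A -> A != 0 ->
  ~ contains_line (quadric A b c) ->
  (exists x y, quadric A b c x /\ quadric A b c y /\ x != y) ->
  exists (sig : ratvecfun R k k.+1) (D : set 'cV[R]_k),
    open D /\ defined_on sig D /\
    hausdorff_null k (rveval sig @` D `\` quadric A b c) /\
    hausdorff_null k (quadric A b c `\` rveval sig @` D) /\
    (forall O : set 'cV[R]_k,
        open O -> O !=set0 ->
        O `<=` D `\` [set t | rveval sig t ord0 ord0 = 0] ->
        hyperplane_cond (rveval sig) O /\ inner_point_cond (rveval sig) O).
Proof.
move=> kpos sA _ nl [x [y [Sx [Sy xy]]]].
have qx : qq A b c x = 0 by apply/quadricE.
have gne : gg A b x != 0.
  apply/eqP => g0; have w0 : y - x != 0 by rewrite subr_eq0 eq_sym.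
  apply: (noline sA nl qx w0); first by rewrite g0 /dotp big1 // => i _; rewrite mxE mul0r.
  have hy : qq A b c (x + (y - x)) = 0 by rewrite addrC subrK; apply/quadricE.
  have d00 : dotp 0 (y - x) = 0 by rewrite /dotp big1 // => i _; rewrite mxE mul0r.
  move: hy; rewrite qq_shift // qx g0 d00 !add0r => e.
  move/eqP: e; rewrite mulf_eq0 invr_eq0 pnatr_eq0 /=; by move/eqP.
have : [exists i0, gg A b x i0 ord0 != 0].
  case: (boolP [exists i0, gg A b x i0 ord0 != 0]) => // /existsPn h.
  exfalso; move/eqP: gne; apply; apply/matrixP => i j.
  by rewrite (ord1 j) [RHS]mxE; apply/eqP; move: (h i); rewrite negbK.
case/existsP => i0 hi0.
have hga : ga A b x i0 != 0 by [].
exists (rsig A b x i0), [set t | QQ A b x i0 t != 0].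
have rvD : forall t, QQ A b x i0 t != 0 -> rveval (rsig A b x i0) t = sig A b x i0 t.
  by move=> t; exact: rveval_sig.
split.
  rewrite openE => t Qt; rewrite /interior.
  have hc : (fun t' => QQ A b x i0 t') @ nbhs t --> QQ A b x i0 t.
    by apply: cvg_qf; apply: cvgc_vv; exact: cvgc_id.
  exact: (near_neq0 hc Qt).
split.
  by move=> t Qt i /=; rewrite peval_PQ.
split.
  apply: (@hn_single _ _ _ x kpos) => s [[t Qt <-]] /=; rewrite rvD //.
  by move=> h; exfalso; apply: h; exact: (sig_in sA hga qx Qt).
split.
  apply: (@hn_single _ _ _ x kpos) => s [Ss nim] /=.
  apply/eqP; apply/negP => /negP sx; apply: nim.
  have [Qt st] := TT_inv sA hga nl qx (proj1 (quadricE _ _ _ _) Ss) sx.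
  by exists (TT A b x i0 s) => //; rewrite rvD.
move=> O oO [t0 Ot0] sub.
have OQ : forall t, O t -> QQ A b x i0 t != 0 by move=> t /sub [].
split.
  move=> [a [beta [a0 hb]]].
  apply: (hyper sA hga kpos nl qx oO Ot0 OQ a0) => t Ot.
  by rewrite -dotpE -rvD ?OQ // hb.
have [t1 [Ot1 good]] := good_point sA hga kpos nl qx oO Ot0 OQ.
exists t1; split => //.
apply: (inner sA hga nl qx oO Ot1 OQ _ good).
have := sub t1 Ot1; rewrite /= => -[_]; rewrite rvD ?OQ //.
by move=> h; apply/eqP => e; apply: h.
Qed.
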